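(* Let $x=(x_1|x_2|x_3)$, $y=(y_1|y_2|y_3)$, $z=(z_1|z_2|z_3)$ be pairwise orthogonal (over $\mathbb{F}_2$) binary vectors of length 24, each split into three blocks of length 8, such that every block $x_i,y_i,z_i$ ($i=1,2,3$) has weight 4 (so each of $x,y,z$ has weight 12). Suppose that for each $i=1,2,3$ the images $\psi(x_i),\psi(y_i),\psi(z_i)$ are linearly independent in the quotient space $\mathbb{F}_2^8/\langle \mathbf{0},\mathbf{1}\rangle$, and that $$\mathrm{wt}(x_i+y_i)=\mathrm{wt}(x_i+z_i)=\mathrm{wt}(y_i+z_i)=4\quad (i=1,2,3).$$ Then: (a) $|\mathcal{L}(x)|=|\mathcal{L}(y)|=|\mathcal{L}(z)|=576^4$; (b) $|\mathcal{L}(x,y)|=16^4$, and moreover $\mathcal{L}(x,y)=\mathcal{L}(x,x+y)=\mathcal{L}(x+y,y)$; (c) $|\mathcal{L}(x,y,z)|=1$.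
   Context: A Latin square of order 8 on the symbols $\{0,1,\dots,7\}$ is an $8\times 8$ array $(a_{i,j})_{i,j=0}^{7}$ in which every symbol occurs exactly once in each row and each column; it is identified with the code $L=\{(i,j,a_{i,j}):0\le i,j\le 7\}\subseteq\{0,\dots,7\}^3$ of 64 words. Let $\mathcal{L}$ be the set of all such codes $L$ (all Latin squares of order 8). Let $\varphi(s)\in\mathbb{F}_2^8$ denote the unit vector with a 1 in position $s$ (positions indexed $0,\dots,7$), and for $L\in\mathcal{L}$ let $C(L)=\{(\varphi(i)\,|\,\varphi(j)\,|\,\varphi(a_{i,j})):(i,j,a_{i,j})\in L\}\subseteq\mathbb{F}_2^{24}$. For $x\in\mathbb{F}_2^{24}$, $\mathcal{L}(x)$ is the set of all $L\in\mathcal{L}$ such that every word of $C(L)$ is orthogonal to $x$ over $\mathbb{F}_2$; $\mathcal{L}(x,y)=\mathcal{L}(x)\cap\mathcal{L}(y)$ and $\mathcal{L}(x,y,z)=\mathcal{L}(x)\cap\mathcal{L}(y)\cap\mathcal{L}(z)$. $\mathbf{0},\mathbf{1}$ denote the all-zero and all-one vectors of length 8, and $\psi:\mathbb{F}_2^8\to\mathbb{F}_2^8/\langle\mathbf{0},\mathbf{1}\rangle$ is the quotient map. $\mathrm{wt}$ denotes Hamming weight. *)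

(* Defs.v *)
From HB Require Import structures.
From mathcomp Require Import all_boot all_order all_algebra.
Set Implicit Arguments. Unset Strict Implicit. Unset Printing Implicit Defensive.
Import GRing.Theory.
Local Open Scope ring_scope.

Notation bvec n := 'rV['F_2]_n.

(* The square is
   identified with its code L = {(i,j,a_{i,j})}; this identification is a
   bijection, so sets/cardinalities of squares agree with those of codes. *)
Definition square := {ffun 'I_8 * 'I_8 -> 'I_8}.

Definition latin (a : square) : bool :=
  [forall i : 'I_8, forall j1 : 'I_8, forall j2 : 'I_8,
     (a (i, j1) == a (i, j2)) ==> (j1 == j2)] &&
  [forall j : 'I_8, forall i1 : 'I_8, forall i2 : 'I_8,
     (a (i1, j) == a (i2, j)) ==> (i1 == i2)].

Definition phi (s : 'I_8) : bvec 8 := \row_(k < 8) (k == s)%:R.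

Definition concat3 (u v w : bvec 8) : bvec 24 :=
  \row_(k < 24) if (k < 8)%N then u 0 (inord k)
                else if (k < 16)%N then v 0 (inord (k - 8))
                else w 0 (inord (k - 16)).

Definition block (x : bvec 24) (k : 'I_3) : bvec 8 :=
  \row_(j < 8) x 0 (inord (8 * k + j)).

Definition dot n (u v : bvec n) : 'F_2 := (u *m v^T) 0 0.
Definition orth n (u v : bvec n) : bool := dot u v == 0.

Definition wt n (v : bvec n) : nat := #|[set k : 'I_n | v 0 k != 0]|.

Definition word (a : square) (ij : 'I_8 * 'I_8) : bvec 24 :=
  concat3 (phi ij.1) (phi ij.2) (phi (a ij)).

Definition LS (x : bvec 24) : {set square} :=
  [set a : square | latin a && [forall ij, orth (word a ij) x]].
Definition LS2 (x y : bvec 24) : {set square} := LS x :&: LS y.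
Definition LS3 (x y z : bvec 24) : {set square} := LS x :&: LS y :&: LS z.

Definition one8 : bvec 8 := \row_(k < 8) 1.

(* psi(u), psi(v), psi(w) linearly independent in F_2^8 / <0,1>:
   no nontrivial F_2-combination of u, v, w lies in the subspace {0, 1}. *)
Definition indep_mod1 (u v w : bvec 8) : bool :=
  [forall a : 'F_2, forall b : 'F_2, forall c : 'F_2,
     ((a != 0) || (b != 0) || (c != 0)) ==>
     (let s := a *: u + b *: v + c *: w in (s != 0) && (s != one8))].

(* Main.v *)
Require Import Defs.
From HB Require Import structures.
From mathcomp Require Import all_boot all_order all_algebra.
From mathcomp Require Import zify.
Import GRing.Theory.
Set Implicit Arguments. Unset Strict Implicit. Unset Printing Implicit Defensive.

Definition latm (n : nat) (b : {ffun 'I_n * 'I_n -> 'I_n}) : bool :=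
  [forall i : 'I_n, forall j1 : 'I_n, forall j2 : 'I_n,
     (b (i, j1) == b (i, j2)) ==> (j1 == j2)] &&
  [forall j : 'I_n, forall i1 : 'I_n, forall i2 : 'I_n,
     (b (i1, j) == b (i2, j)) ==> (i1 == i2)].

Definition colok n (r : seq nat) (t : seq (seq nat)) :=
  all (fun u => all (fun j => nth 0 r j != nth 0 u j) (iota 0 n)) t.
Fixpoint cands n (P : seq (seq nat)) k : seq (seq (seq nat)) :=
  if k is k'.+1 then filter (fun s => if s is r :: t then colok n r t else true)
     [seq r :: t | r <- P, t <- cands n P k'] else [:: [::]].
Definition get (s : seq (seq nat)) i j := nth 0 (nth [::] s i) j.
Definition latn n (s : seq (seq nat)) :=
  all (fun i => all (fun j1 => all (fun j2 => (get s i j1 == get s i j2) ==> (j1 == j2)) (iota 0 n)) (iota 0 n)) (iota 0 n)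
  && all (fun j => all (fun i1 => all (fun i2 => (get s i1 j == get s i2 j) ==> (i1 == i2)) (iota 0 n)) (iota 0 n)) (iota 0 n).
Definition Lsq n := filter (latn n) (cands n (permutations (iota 0 n)) n).

Lemma cands_inv n P k s : s \in cands n P k -> size s = k /\ all (mem P) s.
Proof.
elim: k s => [|k IH] s /=; first by rewrite inE => /eqP ->.
rewrite mem_filter => /andP [_ /allpairsP [[r t] /= [Hr Ht ->]]].
by have [Hs Ha] := IH _ Ht; rewrite /= Hs Hr Ha.
Qed.

Lemma cands_mem n P k s : size s = k -> all (mem P) s ->
  (forall i1 i2 j, i1 < i2 < size s -> j < n -> get s i1 j != get s i2 j) ->
  s \in cands n P k.
Proof.
elim: k s => [|k IH] [|r t] //= [Hs] /andP [Hr Ht] Hd.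
rewrite mem_filter; apply/andP; split; last first.
  apply: allpairs_f => //; apply: IH => // i1 i2 j Hi Hj.
  by apply: (Hd i1.+1 i2.+1 j).
apply/allP => u Hu; apply/allP => j; rewrite mem_iota add0n => Hj.
have := Hd 0 (index u t).+1 j; rewrite /get /= nth_index //; apply => //.
by rewrite ltnS index_mem.
Qed.

Section Enc.
Variable k : nat.
Local Notation n := k.+1.

Definition enc (x : {ffun 'I_n * 'I_n -> 'I_n}) : seq (seq nat) :=
  [seq [seq val (x (inord i, inord j)) | j <- iota 0 n] | i <- iota 0 n].
Definition toF (s : seq (seq nat)) : {ffun 'I_n * 'I_n -> 'I_n} :=
  [ffun ij : 'I_n * 'I_n => inord (get s ij.1 ij.2)].

Lemma get_enc x i j : i < n -> j < n -> get (enc x) i j = val (x (inord i, inord j)).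
Proof.
move=> Hi Hj; rewrite /get /enc (nth_map 0) ?size_iota // nth_iota // add0n.
by rewrite (nth_map 0) ?size_iota // nth_iota.
Qed.

Lemma toF_enc x : toF (enc x) = x.
Proof.
apply/ffunP => [[i j]]; rewrite ffunE /= get_enc //.
by apply: val_inj; rewrite /= inordK // !inord_val.
Qed.

Lemma size_enc x : size (enc x) = n. Proof. by rewrite size_map size_iota. Qed.

Lemma enc_rowP x i : latm x -> i < n ->
  nth [::] (enc x) i \in permutations (iota 0 n).
Proof.
move=> /andP [/forallP Hl _] Hi; rewrite mem_permutations.
rewrite /enc (nth_map 0) ?size_iota // nth_iota // add0n.
set r := map _ _.
have Ur : uniq r.
  rewrite map_inj_in_uniq ?iota_uniq // => j1 j2; rewrite !mem_iota !add0n => H1 H2 /val_inj E.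
  have /forallP/(_ (inord j1))/forallP/(_ (inord j2)) := Hl (inord i); move=> HH; move: HH.
  by rewrite E eqxx /= => /eqP/(congr1 val); rewrite /= !inordK.
have Sr : {subset r <= iota 0 n}.
  by rewrite /r => v /mapP [j _ ->]; rewrite mem_iota add0n ltn_ord.
apply: uniq_perm => //; first exact: iota_uniq.
have [] := uniq_min_size Ur Sr => //; by rewrite size_map.
Qed.

Lemma latn_enc x : latm x -> latn n (enc x).
Proof.
move=> Hx; have /andP [/forallP Hl /forallP Hc] := Hx.
apply/andP; split.
  apply/allP => i; rewrite mem_iota add0n => Hi.
  apply/allP => j1; rewrite mem_iota add0n => H1.
  apply/allP => j2; rewrite mem_iota add0n => H2.
  rewrite !get_enc //; apply/implyP => /eqP /val_inj E.
  have /forallP/(_ (inord j1))/forallP/(_ (inord j2)) := Hl (inord i); move=> HH; move: HH.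
  by rewrite E eqxx /= => /eqP/(congr1 val); rewrite /= !inordK // => ->.
apply/allP => j; rewrite mem_iota add0n => Hj.
apply/allP => i1; rewrite mem_iota add0n => H1.
apply/allP => i2; rewrite mem_iota add0n => H2.
rewrite !get_enc //; apply/implyP => /eqP /val_inj E.
have /forallP/(_ (inord i1))/forallP/(_ (inord i2)) := Hc (inord j); move=> HH; move: HH.
by rewrite E eqxx /= => /eqP/(congr1 val); rewrite /= !inordK // => ->.
Qed.

Lemma enc_mem x : latm x -> enc x \in Lsq n.
Proof.
move=> Hx; rewrite mem_filter latn_enc // andTb.
apply: cands_mem; first exact: size_enc.
  apply/allP => r /(nthP [::]) [i]; rewrite size_enc => Hi <-.
  exact: enc_rowP.
move=> i1 i2 j /andP [H12 H2]; rewrite size_enc in H2 => Hj.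
have H1 : i1 < n by apply: ltn_trans H2.
rewrite !get_enc //; apply/negP => /eqP /val_inj E.
have /andP [_ /forallP Hc] := Hx.
have /forallP/(_ (inord i1))/forallP/(_ (inord i2)) := Hc (inord j); move=> HH; move: HH.
rewrite E eqxx /= => /eqP/(congr1 val); rewrite /= !inordK // => E'.
by rewrite E' ltnn in H12.
Qed.

Lemma Lsq_wf s : s \in Lsq n ->
  size s = n /\ forall i, i < n -> size (nth [::] s i) = n /\
     forall j, j < n -> get s i j < n.
Proof.
rewrite mem_filter => /andP [_ /cands_inv [Hs Ha]]; split => // i Hi.
have : nth [::] s i \in permutations (iota 0 n) by apply: (allP Ha); rewrite mem_nth ?Hs.
rewrite mem_permutations => Hp; split; first by rewrite (perm_size Hp) size_iota.
move=> j Hj; have : get s i j \in iota 0 n.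
  by rewrite -(perm_mem Hp) mem_nth // (perm_size Hp) size_iota.
by rewrite mem_iota.
Qed.

Lemma enc_toF s : s \in Lsq n -> enc (toF s) = s.
Proof.
move=> Hs; have [Hsz Hr] := Lsq_wf Hs.
rewrite -[RHS](mkseq_nth [::]) Hsz /mkseq /enc; apply/eq_in_map => i.
rewrite mem_iota add0n => Hi.
have [Hri Hg] := Hr i Hi.
rewrite -[RHS](mkseq_nth 0) Hri /mkseq; apply/eq_in_map => j.
rewrite mem_iota add0n => Hj.
by rewrite ffunE /= !inordK // Hg.
Qed.

Lemma latm_toF s : s \in Lsq n -> latm (toF s).
Proof.
move=> Hs; have [Hsz Hr] := Lsq_wf Hs.
move: Hs; rewrite mem_filter => /andP [/andP [Hl Hc] _].
apply/andP; split.
  apply/forallP => i; apply/forallP => j1; apply/forallP => j2.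
  rewrite !ffunE /=; apply/implyP => /eqP /(congr1 val).
  rewrite /= !inordK ?(proj2 (Hr _ (ltn_ord i))) // => E.
  have := allP Hl i; rewrite mem_iota add0n ltn_ord => /(_ isT).
  move/allP/(_ j1); rewrite mem_iota add0n ltn_ord => /(_ isT).
  move/allP/(_ j2); rewrite mem_iota add0n ltn_ord => /(_ isT).
  by rewrite E eqxx.
apply/forallP => j; apply/forallP => i1; apply/forallP => i2.
rewrite !ffunE /=; apply/implyP => /eqP /(congr1 val).
rewrite /= !inordK ?(proj2 (Hr _ (ltn_ord i1))) ?(proj2 (Hr _ (ltn_ord i2))) // => E.
have := allP Hc j; rewrite mem_iota add0n ltn_ord => /(_ isT).
move/allP/(_ i1); rewrite mem_iota add0n ltn_ord => /(_ isT).
move/allP/(_ i2); rewrite mem_iota add0n ltn_ord => /(_ isT).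
by rewrite E eqxx.
Qed.

Lemma nlat_list : uniq (Lsq n) ->
  #|[set b : {ffun 'I_n * 'I_n -> 'I_n} | latm b]| = size (Lsq n).
Proof.
move=> U.
have U' : uniq (map toF (Lsq n)).
  rewrite map_inj_in_uniq // => s t Hs Ht E.
  by rewrite -(enc_toF Hs) -(enc_toF Ht) E.
rewrite -(size_map toF) -(card_uniqP U'); apply: eq_card => b.
rewrite inE; apply/idP/idP.
  by move=> Hb; rewrite -(toF_enc b); apply: map_f; apply: enc_mem.
by move=> /mapP [s Hs ->]; apply: latm_toF.
Qed.
End Enc.

Lemma nlat4 : #|[set b : {ffun 'I_4 * 'I_4 -> 'I_4} | latm b]| = 576.
Proof.
have H : (size (Lsq 4) == 576) && uniq (Lsq 4) by vm_compute.
by case/andP: H => /eqP <- U; apply: (@nlat_list 3).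
Qed.

Lemma nlat2 : #|[set b : {ffun 'I_2 * 'I_2 -> 'I_2} | latm b]| = 2.
Proof.
have H : (size (Lsq 2) == 2) && uniq (Lsq 2) by vm_compute.
by case/andP: H => /eqP <- U; apply: (@nlat_list 1).
Qed.

Lemma nlat1 : #|[set b : {ffun 'I_1 * 'I_1 -> 'I_1} | latm b]| = 1.
Proof.
have H : (size (Lsq 1) == 1) && uniq (Lsq 1) by vm_compute.
by case/andP: H => /eqP <- U; apply: (@nlat_list 0).
Qed.

Section Gen.
Variables (G : finType) (op : G -> G -> G) (m : nat).
Variables (cr cc cs : 'I_8 -> G).
Variables (hr hc hs : 'I_8 -> G * 'I_m) (gr gc gs : G * 'I_m -> 'I_8).
Hypotheses (hrK : cancel hr gr) (grK : cancel gr hr) (hr1 : forall t, (hr t).1 = cr t).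
Hypotheses (hcK : cancel hc gc) (gcK : cancel gc hc) (hc1 : forall t, (hc t).1 = cc t).
Hypotheses (hsK : cancel hs gs) (gsK : cancel gs hs) (hs1 : forall t, (hs t).1 = cs t).
Hypotheses (op1 : forall u, injective (op u)) (op2 : forall v, injective (op^~ v)).

Definition Pset := [set a : square | latin a &&
   [forall ij, cs (a ij) == op (cr ij.1) (cc ij.2)]].
Definition Lm := [set b : {ffun 'I_m * 'I_m -> 'I_m} | latm b].
Definition Psi (F : {ffun G * G -> {ffun 'I_m * 'I_m -> 'I_m}}) : square :=
  [ffun tt : 'I_8 * 'I_8 => gs (op (cr tt.1) (cc tt.2),
      F (cr tt.1, cc tt.2) ((hr tt.1).2, (hc tt.2).2))].
Definition Phi (a : square) : {ffun G * G -> {ffun 'I_m * 'I_m -> 'I_m}} :=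
  [ffun uv : G * G => [ffun ij : 'I_m * 'I_m =>
      (hs (a (gr (uv.1, ij.1), gc (uv.2, ij.2)))).2]].

Lemma cr_gr p : cr (gr p) = p.1. Proof. by rewrite -hr1 grK. Qed.
Lemma cc_gc p : cc (gc p) = p.1. Proof. by rewrite -hc1 gcK. Qed.

Lemma Psi_inj : injective Psi.
Proof.
move=> F F' E; apply/ffunP => [[u v]]; apply/ffunP => [[i j]].
have := congr1 (fun a : square => hs (a (gr (u, i), gc (v, j)))) E.
rewrite !ffunE /= !gsK !cr_gr !cc_gc !grK !gcK /=.
by case.
Qed.

Lemma Pset_eq : Pset = Psi @: ffun_on Lm.
Proof.
apply/setP => a; rewrite inE; apply/idP/imsetP.
  move=> /andP [Hl /forallP Hc]; exists (Phi a).
    apply/ffun_onP => [[u v]]; rewrite inE; apply/andP; split.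
      apply/forallP => i; apply/forallP => j1; apply/forallP => j2.
      rewrite !ffunE /=; apply/implyP => /eqP E.
      have E2 : hs (a (gr (u, i), gc (v, j1))) = hs (a (gr (u, i), gc (v, j2))).
        rewrite [LHS]surjective_pairing [RHS]surjective_pairing E !hs1.
        by rewrite (eqP (Hc (_, _))) (eqP (Hc (_, _))) /= !cr_gr !cc_gc.
      move/andP: Hl => [/forallP Hr _].
      move: (Hr (gr (u, i))) => /forallP/(_ (gc (v, j1)))/forallP/(_ (gc (v, j2))).
      rewrite (can_inj hsK E2) eqxx /= => /eqP /(congr1 hc).
      by rewrite !gcK => -[->].
    apply/forallP => j; apply/forallP => i1; apply/forallP => i2.
    rewrite !ffunE /=; apply/implyP => /eqP E.
    have E2 : hs (a (gr (u, i1), gc (v, j))) = hs (a (gr (u, i2), gc (v, j))).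
      rewrite [LHS]surjective_pairing [RHS]surjective_pairing E !hs1.
      by rewrite (eqP (Hc (_, _))) (eqP (Hc (_, _))) /= !cr_gr !cc_gc.
    move/andP: Hl => [_ /forallP Hr].
    move: (Hr (gc (v, j))) => /forallP/(_ (gr (u, i1)))/forallP/(_ (gr (u, i2))).
    rewrite (can_inj hsK E2) eqxx /= => /eqP /(congr1 hr).
    by rewrite !grK => -[->].
  apply/ffunP => [[t1 t2]]; rewrite !ffunE /=.
  rewrite -!hr1 -!hc1 -!surjective_pairing hrK hcK.
  rewrite -{1}(hsK (a (t1, t2))); congr gs.
  by rewrite [LHS]surjective_pairing hs1 (eqP (Hc (_, _))) /= hr1 hc1.
move=> [F /ffun_onP HF ->]; apply/andP; split; last first.
  by apply/forallP => -[t1 t2]; rewrite ffunE -hs1 gsK.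
have HL uv : latm (F uv) by have := HF uv; rewrite inE.
apply/andP; split.
  apply/forallP => i; apply/forallP => j1; apply/forallP => j2.
  rewrite !ffunE /=; apply/implyP => /eqP /(can_inj gsK) [/op1 Ec].
  rewrite -Ec => E; move/andP: (HL (cr i, cc j1)) => [/forallP Hr _].
  move: (Hr (hr i).2) => /forallP/(_ (hc j1).2)/forallP/(_ (hc j2).2).
  rewrite E eqxx /= => /eqP E2.
  apply/eqP; apply: (can_inj hcK).
  by rewrite [hc j1]surjective_pairing [hc j2]surjective_pairing E2 !hc1 Ec.
apply/forallP => j; apply/forallP => i1; apply/forallP => i2.
rewrite !ffunE /=; apply/implyP => /eqP /(can_inj gsK) [/op2 Ec].
rewrite -Ec => E; move/andP: (HL (cr i1, cc j)) => [_ /forallP Hr].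
move: (Hr (hc j).2) => /forallP/(_ (hr i1).2)/forallP/(_ (hr i2).2).
rewrite E eqxx /= => /eqP E2.
apply/eqP; apply: (can_inj hrK).
by rewrite [hr i1]surjective_pairing [hr i2]surjective_pairing E2 !hr1 Ec.
Qed.

Lemma card_Pset : #|Pset| = (#|Lm| ^ (#|G| * #|G|))%N.
Proof.
by rewrite Pset_eq (card_imset _ Psi_inj) card_ffun_on card_prod.
Qed.
End Gen.

Lemma exists_lab (G : finType) (cl : 'I_8 -> G) m :
  (forall g, #|[set t | cl t == g]| = m) -> (#|G| * m = 8)%N ->
  exists h : 'I_8 -> G * 'I_m, exists g,
    [/\ cancel h g, cancel g h & forall t, (h t).1 = cl t].
Proof.
move=> Hf Hc.
have Hlt t : (index t (enum [set s | cl s == cl t]) < m)%N.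
  by rewrite -(Hf (cl t)) cardE index_mem mem_enum inE.
pose h t := (cl t, Ordinal (Hlt t)).
have hinj : injective h.
  move=> t t' [E1 E2].
  have Ht : t \in enum [set s | cl s == cl t] by rewrite mem_enum inE.
  have Ht' : t' \in enum [set s | cl s == cl t] by rewrite mem_enum inE E1.
  have := congr1 (nth t (enum [set s | cl s == cl t])) E2.
  by rewrite /= nth_index // E1 nth_index // -E1.
have [g hK gK] : bijective h.
  by apply: (inj_card_bij hinj); rewrite card_prod card_ord Hc card_ord.
by exists h, g.
Qed.

Theorem count_gen (G : finType) (op : G -> G -> G) (m : nat) (cr cc cs : 'I_8 -> G) :
  (forall u, injective (op u)) -> (forall v, injective (op^~ v)) ->
  (forall g, #|[set t | cr t == g]| = m) ->
  (forall g, #|[set t | cc t == g]| = m) ->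
  (forall g, #|[set t | cs t == g]| = m) -> (#|G| * m = 8)%N ->
  #|[set a : square | latin a && [forall ij, cs (a ij) == op (cr ij.1) (cc ij.2)]]|
   = (#|[set b : {ffun 'I_m * 'I_m -> 'I_m} | latm b]| ^ (#|G| * #|G|))%N.
Proof.
move=> o1 o2 Hr Hc Hs Hm.
have [hr [gr [hrK grK hr1]]] := exists_lab Hr Hm.
have [hc [gc [hcK gcK hc1]]] := exists_lab Hc Hm.
have [hs [gs [hsK gsK hs1]]] := exists_lab Hs Hm.
exact: (card_Pset hrK grK hr1 hcK gcK hc1 hsK gsK hs1 o1 o2).
Qed.

Lemma card_part (G : finType) (f : 'I_8 -> G) (P : pred G) :
  #|[set t | P (f t)]| = \sum_(g | P g) #|[set t | f t == g]|.
Proof.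
rewrite -sum1_card (partition_big f P) /=; last by move=> t; rewrite inE.
apply: eq_bigr => g Pg; rewrite -sum1_card; apply: eq_bigl => t.
by rewrite !inE; case: eqP => [->|]; rewrite ?Pg ?andbF.
Qed.

Lemma sum_bb (F : bool * bool -> nat) :
  \sum_g F g = F (true, true) + F (true, false) + F (false, true) + F (false, false).
Proof.
rewrite (eq_bigr (fun p => F (p.1, p.2))); last by case.
by rewrite -(pair_bigA _ (fun i j => F (i, j))) !big_bool /= addnA.
Qed.

Lemma sum_bbb (F : bool * bool * bool -> nat) :
  \sum_g F g = F (true, true, true) + F (true, true, false) + F (true, false, true)
   + F (true, false, false) + F (false, true, true) + F (false, true, false)
   + F (false, false, true) + F (false, false, false).
Proof.
rewrite (eq_bigr (fun p => F (p.1, p.2))); last by case.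
rewrite -(pair_bigA _ (fun i j => F (i, j))) /= (eq_bigr (fun p => F (p, true) + F (p, false))); last by move=> p _; rewrite big_bool.
by rewrite sum_bb /=; lia.
Qed.

Lemma card8 (P : pred 'I_8) : #|[set t | P t]| <= 8.
Proof. by have := max_card [set t | P t]; rewrite card_ord. Qed.

Lemma fib1 (f : 'I_8 -> bool) : #|[set t | f t]| = 4 ->
  forall g, #|[set t | f t == g]| = 4.
Proof.
move=> H [].
  by rewrite -[RHS]H; apply: eq_card => t; rewrite !inE eqb_id.
have := cardsC [set t | f t]; rewrite H card_ord => E.
rewrite (_ : [set t | f t == false] = ~: [set t | f t]); first lia.
by apply/setP => t; rewrite !inE eqbF_neg.
Qed.

Lemma fib2 (f1 f2 : 'I_8 -> bool) : #|[set t | f1 t]| = 4 -> #|[set t | f2 t]| = 4 ->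
  #|[set t | f1 t (+) f2 t]| = 4 -> forall g, #|[set t | (f1 t, f2 t) == g]| = 2.
Proof.
move=> H1 H2 H3; pose f t := (f1 t, f2 t).
have E1 : #|[set t | f1 t]| = \sum_(g | g.1) #|[set t | f t == g]| := card_part f (fun g => g.1).
have E2 : #|[set t | f2 t]| = \sum_(g | g.2) #|[set t | f t == g]| := card_part f (fun g => g.2).
have E3 : #|[set t | f1 t (+) f2 t]| = \sum_(g | g.1 (+) g.2) #|[set t | f t == g]| :=
  card_part f (fun g => g.1 (+) g.2).
have E4 : #|[set t | true]| = \sum_(g | true) #|[set t | f t == g]| := card_part f (fun g => true).
rewrite big_mkcond sum_bb /= in E1; rewrite big_mkcond sum_bb /= in E2.
rewrite big_mkcond sum_bb /= in E3; rewrite sum_bb /= in E4.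
have E5 : #|[set t : 'I_8 | true]| = 8 by rewrite cardsT card_ord.
rewrite /f in E1 E2 E3 E4.
rewrite H1 in E1; rewrite H2 in E2; rewrite H3 in E3; rewrite cardsT card_ord in E4.
case=> [[] []]; set a := #|[set t | (f1 t, f2 t) == (true, true)]| in E1 E2 E3 E4 *; set b := #|[set t | (f1 t, f2 t) == (true, false)]| in E1 E2 E3 E4 *; set c := #|[set t | (f1 t, f2 t) == (false, true)]| in E1 E2 E3 E4 *; set d := #|[set t | (f1 t, f2 t) == (false, false)]| in E1 E2 E3 E4 *; lia.
Qed.

Lemma fib3 (f1 f2 f3 : 'I_8 -> bool) : #|[set t | f1 t]| = 4 -> #|[set t | f2 t]| = 4 ->
  #|[set t | f3 t]| = 4 ->
  #|[set t | f1 t (+) f2 t]| = 4 -> #|[set t | f1 t (+) f3 t]| = 4 ->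
  #|[set t | f2 t (+) f3 t]| = 4 ->
  0 < #|[set t | f1 t (+) f2 t (+) f3 t]| < 8 ->
  forall g, #|[set t | (f1 t, f2 t, f3 t) == g]| = 1.
Proof.
move=> H1 H2 H3 H4 H5 H6 H7; pose f t := (f1 t, f2 t, f3 t).
have E1 : #|[set t | f1 t]| = \sum_(g | g.1.1) #|[set t | f t == g]| := card_part f (fun g => g.1.1).
have E2 : #|[set t | f2 t]| = \sum_(g | g.1.2) #|[set t | f t == g]| := card_part f (fun g => g.1.2).
have E3 : #|[set t | f3 t]| = \sum_(g | g.2) #|[set t | f t == g]| := card_part f (fun g => g.2).
have E4 : #|[set t | f1 t (+) f2 t]| = \sum_(g | g.1.1 (+) g.1.2) #|[set t | f t == g]| :=
  card_part f (fun g => g.1.1 (+) g.1.2).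
have E5 : #|[set t | f1 t (+) f3 t]| = \sum_(g | g.1.1 (+) g.2) #|[set t | f t == g]| :=
  card_part f (fun g => g.1.1 (+) g.2).
have E6 : #|[set t | f2 t (+) f3 t]| = \sum_(g | g.1.2 (+) g.2) #|[set t | f t == g]| :=
  card_part f (fun g => g.1.2 (+) g.2).
have E7 : #|[set t | f1 t (+) f2 t (+) f3 t]| = \sum_(g | g.1.1 (+) g.1.2 (+) g.2) #|[set t | f t == g]| :=
  card_part f (fun g => g.1.1 (+) g.1.2 (+) g.2).
have E8 : #|[set t | true]| = \sum_(g | true) #|[set t | f t == g]| := card_part f (fun g => true).
have E9 : #|[set t : 'I_8 | true]| = 8 by rewrite cardsT card_ord.
rewrite big_mkcond sum_bbb /= in E1; rewrite big_mkcond sum_bbb /= in E2.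
rewrite big_mkcond sum_bbb /= in E3; rewrite big_mkcond sum_bbb /= in E4.
rewrite big_mkcond sum_bbb /= in E5; rewrite big_mkcond sum_bbb /= in E6.
rewrite big_mkcond sum_bbb /= in E7; rewrite sum_bbb /= in E8.
rewrite /f in E1 E2 E3 E4 E5 E6 E7 E8.
rewrite H1 in E1; rewrite H2 in E2; rewrite H3 in E3; rewrite H4 in E4.
rewrite H5 in E5; rewrite H6 in E6; rewrite E7 in H7; rewrite cardsT card_ord in E8.
case=> [[[] []] []]; set n0 := #|[set t | (f1 t, f2 t, f3 t) == (true, true, true)]| in E1 E2 E3 E4 E5 E6 H7 E8 *; set n1 := #|[set t | (f1 t, f2 t, f3 t) == (true, true, false)]| in E1 E2 E3 E4 E5 E6 H7 E8 *; set n2 := #|[set t | (f1 t, f2 t, f3 t) == (true, false, true)]| in E1 E2 E3 E4 E5 E6 H7 E8 *; set n3 := #|[set t | (f1 t, f2 t, f3 t) == (true, false, false)]| in E1 E2 E3 E4 E5 E6 H7 E8 *; set n4 := #|[set t | (f1 t, f2 t, f3 t) == (false, true, true)]| in E1 E2 E3 E4 E5 E6 H7 E8 *; set n5 := #|[set t | (f1 t, f2 t, f3 t) == (false, true, false)]| in E1 E2 E3 E4 E5 E6 H7 E8 *; set n6 := #|[set t | (f1 t, f2 t, f3 t) == (false, false, true)]| in E1 E2 E3 E4 E5 E6 H7 E8 *; set n7 := #|[set t | (f1 t, f2 t, f3 t) == (false, false, false)]| in E1 E2 E3 E4 E5 E6 H7 E8 *; lia.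
Qed.

Local Open Scope ring_scope.

Lemma F2_cases (u : 'F_2) : u = 0 \/ u = 1.
Proof. by case: u => [[|[|k]] Hk]; [left; apply: val_inj | right; apply: val_inj |]. Qed.

Lemma F2_11 : (1 + 1 : 'F_2) = 0. Proof. by apply: val_inj. Qed.

Lemma F2_orth (u v w : 'F_2) : (u + v + w == 0) = ((w != 0) == ((u != 0) (+) (v != 0))).
Proof.
by case: (F2_cases u) => ->; case: (F2_cases v) => ->; case: (F2_cases w) => ->;
  rewrite ?addr0 ?add0r ?F2_11 ?addr0 ?add0r ?F2_11.
Qed.

Lemma F2_add (u v : 'F_2) : (u + v != 0) = ((u != 0) (+) (v != 0)).
Proof.
by case: (F2_cases u) => ->; case: (F2_cases v) => ->; rewrite ?addr0 ?add0r ?F2_11.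
Qed.

Definition b0 : 'I_3 := @Ordinal 3 0 isT.
Definition b1 : 'I_3 := @Ordinal 3 1 isT.
Definition b2 : 'I_3 := @Ordinal 3 2 isT.

Definition delta (l : 'I_24) : bvec 24 := \row_q (q == l)%:R.

Lemma dot_delta l (x : bvec 24) : dot (delta l) x = x 0 l.
Proof.
rewrite /dot mxE (bigD1 l) //= big1 ?addr0; first by rewrite !mxE eqxx mul1r.
by move=> q Hq; rewrite !mxE (negbTE Hq) mul0r.
Qed.

Lemma dotDl (u v x : bvec 24) : dot (u + v) x = dot u x + dot v x.
Proof. by rewrite /dot mulmxDl mxE. Qed.

Lemma dotDr (u x y : bvec 24) : dot u (x + y) = dot u x + dot u y.
Proof. by rewrite /dot linearD mulmxDr mxE. Qed.

Lemma eq_inord24 (q : 'I_24) v : (v < 24)%N -> (q == inord v) = (nat_of_ord q == v).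
Proof. by move=> Hv; rewrite -val_eqE /= inordK. Qed.

Lemma concat_delta (i j k : 'I_8) :
  concat3 (phi i) (phi j) (phi k) =
  delta (inord i) + delta (inord (8 + j)) + delta (inord (16 + k)).
Proof.
apply/rowP => q; rewrite !mxE.
have Hi := ltn_ord i; have Hj := ltn_ord j; have Hk := ltn_ord k.
rewrite !eq_inord24; try lia.
case: (ltnP q 8) => H1.
  rewrite (_ : (inord q == i) = (nat_of_ord q == i)); last by rewrite -val_eqE /= inordK.
  rewrite (_ : (nat_of_ord q == 8 + j)%N = false); last by apply/negbTE/eqP; lia.
  rewrite (_ : (nat_of_ord q == 16 + k)%N = false); last by apply/negbTE/eqP; lia.
  by rewrite !addr0.
case: (ltnP q 16) => H2.
  rewrite (_ : (inord (q - 8) == j) = (nat_of_ord q == 8 + j)%N); last first.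
    rewrite -val_eqE /= inordK; last lia.
    by apply/eqP/eqP; lia.
  rewrite (_ : (nat_of_ord q == i) = false); last by apply/negbTE/eqP; lia.
  rewrite (_ : (nat_of_ord q == 16 + k)%N = false); last by apply/negbTE/eqP; lia.
  by rewrite addr0 add0r.
rewrite (_ : (inord (q - 16) == k) = (nat_of_ord q == 16 + k)%N); last first.
  have Hq := ltn_ord q.
  rewrite -val_eqE /= inordK; last lia.
  by apply/eqP/eqP; lia.
rewrite (_ : (nat_of_ord q == i) = false); last by apply/negbTE/eqP; lia.
rewrite (_ : (nat_of_ord q == 8 + j)%N = false); last by apply/negbTE/eqP; lia.
by rewrite !add0r.
Qed.

Definition xb (x : bvec 24) (k : 'I_3) (t : 'I_8) : bool := block x k 0 t != 0.

Lemma dot_word (a : square) i j x :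
  dot (word a (i, j)) x = block x b0 0 i + block x b1 0 j + block x b2 0 (a (i, j)).
Proof.
rewrite /word /= concat_delta !dotDl !dot_delta /block !mxE /=.
by [].
Qed.

Lemma orth_word (a : square) ij x :
  orth (word a ij) x = (xb x b2 (a ij) == xb x b0 ij.1 (+) xb x b1 ij.2).
Proof. by case: ij => i j; rewrite /orth dot_word F2_orth. Qed.

Lemma wt_add2 (u v : bvec 8) :
  wt (u + v) = #|[set t | (u 0 t != 0) (+) (v 0 t != 0)]|.
Proof. by apply: eq_card => t; rewrite !inE !mxE F2_add. Qed.

Lemma wt_add3 (u v w : bvec 8) :
  wt (u + v + w) = #|[set t | (u 0 t != 0) (+) (v 0 t != 0) (+) (w 0 t != 0)]|.
Proof. by apply: eq_card => t; rewrite !inE !mxE !F2_add. Qed.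

Lemma wt_pos (v : bvec 8) : v != 0 -> (0 < wt v)%N.
Proof.
apply: contraR; rewrite -leqNgt leqn0 => /eqP /cards0_eq H.
apply/eqP/rowP => t; rewrite mxE.
have : t \notin [set k | v 0 k != 0] by rewrite H inE.
by rewrite inE negbK => /eqP.
Qed.

Lemma wt_lt8 (v : bvec 8) : v != one8 -> (wt v < 8)%N.
Proof.
apply: contraR; rewrite -leqNgt => H.
have H8 : wt v = 8%N by apply/eqP; rewrite eqn_leq H andbT /wt card8.
have := cardsC [set k | v 0 k != 0]; rewrite -/(wt v) H8 card_ord => E.
have /cards0_eq HC : #|~: [set k | v 0 k != 0]| = 0%N by lia.
apply/eqP/rowP => t; rewrite !mxE.
have : t \notin ~: [set k | v 0 k != 0] by rewrite HC inE.
rewrite !inE negbK; case: (F2_cases (v 0 t)) => -> //; rewrite eqxx.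
Qed.

Definition op2 (p q : bool * bool) : bool * bool := (p.1 (+) q.1, p.2 (+) q.2).
Definition op3 (p q : bool * bool * bool) : bool * bool * bool :=
  (p.1.1 (+) q.1.1, p.1.2 (+) q.1.2, p.2 (+) q.2).

Lemma LSP x a : (a \in LS x) = latin a && [forall ij, orth (word a ij) x].
Proof. exact: (in_set _ _). Qed.
Lemma LS2P x y a : (a \in LS2 x y) = (latin a && [forall ij, orth (word a ij) x])
   && (latin a && [forall ij, orth (word a ij) y]).
Proof. by rewrite /LS2 in_setI; congr (_ && _); apply: LSP. Qed.
Lemma LS3P x y z a : (a \in LS3 x y z) = (latin a && [forall ij, orth (word a ij) x])
   && (latin a && [forall ij, orth (word a ij) y]) && (latin a && [forall ij, orth (word a ij) z]).
Proof. by rewrite /LS3 in_setI [in LHS]in_setI; congr (_ && _ && _); apply: LSP. Qed.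
Lemma andb_c3 (l A B C : bool) : (A -> B = C) -> (l && A) && (l && B) = (l && A) && (l && C).
Proof. by case: l; case: A => // /(_ isT) ->. Qed.
Lemma andb_c3' (l A B C : bool) : (B -> A = C) -> (l && A) && (l && B) = (l && C) && (l && B).
Proof. by case: l; case: B => [/(_ isT) ->|]; rewrite ?andbF. Qed.

Lemma LS1_eq x : LS x = [set a : square | latin a &&
  [forall ij, xb x b2 (a ij) == addb (xb x b0 ij.1) (xb x b1 ij.2)]].
Proof.
apply/setP => a; rewrite [LHS]LSP [RHS]in_set; congr (_ && _); apply: eq_forallb => ij.
exact: orth_word.
Qed.

Lemma LS2_eq x y : LS2 x y = [set a : square | latin a &&
  [forall ij, (xb x b2 (a ij), xb y b2 (a ij)) ==
     op2 (xb x b0 ij.1, xb y b0 ij.1) (xb x b1 ij.2, xb y b1 ij.2)]].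
Proof.
apply/setP => a; rewrite [LHS]LS2P [RHS]in_set.
case: (latin a); rewrite ?andFb ?andTb //.
apply/andP/forallP => [[/forallP H1 /forallP H2] ij | H].
  by rewrite xpair_eqE -!orth_word H1 H2.
by split; apply/forallP => ij; have := H ij; rewrite xpair_eqE -!orth_word => /andP [].
Qed.

Lemma LS3_eq x y z : LS3 x y z = [set a : square | latin a &&
  [forall ij, (xb x b2 (a ij), xb y b2 (a ij), xb z b2 (a ij)) ==
     op3 (xb x b0 ij.1, xb y b0 ij.1, xb z b0 ij.1)
         (xb x b1 ij.2, xb y b1 ij.2, xb z b1 ij.2)]].
Proof.
apply/setP => a; rewrite [LHS]LS3P [RHS]in_set.
case: (latin a); rewrite ?andFb ?andTb //.
apply/andP/forallP => [[/andP [/forallP H1 /forallP H2] /forallP H3] ij | H].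
  by rewrite !xpair_eqE -!orth_word H1 H2 H3.
split; first (apply/andP; split).
- by apply/forallP => ij; have := H ij; rewrite !xpair_eqE -!orth_word => /andP [/andP []].
- by apply/forallP => ij; have := H ij; rewrite !xpair_eqE -!orth_word => /andP [/andP []].
- by apply/forallP => ij; have := H ij; rewrite !xpair_eqE -!orth_word => /andP [/andP []].
Qed.

Lemma LS2_sum1 x y : LS2 x y = LS2 x (x + y).
Proof.
apply/setP => a; rewrite [LHS]LS2P [RHS]LS2P; apply: andb_c3 => /forallP H1.
apply: eq_forallb => ij.
by rewrite /orth dotDr (eqP (H1 ij)) add0r.
Qed.

Lemma LS2_sum2 x y : LS2 x y = LS2 (x + y) y.
Proof.
apply/setP => a; rewrite [LHS]LS2P [RHS]LS2P; apply: andb_c3' => /forallP H1.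
apply: eq_forallb => ij.
by rewrite /orth dotDr (eqP (H1 ij)) addr0.
Qed.

Lemma LSa x : (forall k, wt (block x k) = 4%N) -> #|LS x| = (576 ^ 4)%N.
Proof.
move=> Hw.
have H8 : (#|{: bool}| * 4 = 8)%N by rewrite card_bool.
have E := @count_gen bool addb 4 (xb x b0) (xb x b1) (xb x b2)
  (fun u => can_inj (addKb u)) (fun v => can_inj (addbK v))
  (fib1 (Hw b0)) (fib1 (Hw b1)) (fib1 (Hw b2)) H8.
by rewrite LS1_eq E nlat4 card_bool.
Qed.

Lemma LSb x y : (forall k, wt (block x k) = 4%N) -> (forall k, wt (block y k) = 4%N) ->
  (forall k, wt (block x k + block y k) = 4%N) -> #|LS2 x y| = (16 ^ 4)%N.
Proof.
move=> Hx Hy Hxy.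
have H3 k : #|[set t | xb x k t (+) xb y k t]| = 4%N := etrans (esym (wt_add2 _ _)) (Hxy k).
have F k := fib2 (Hx k) (Hy k) (H3 k).
have H8 : (#|{: bool * bool}| * 2 = 8)%N by rewrite card_prod card_bool.
have o1 u : injective (op2 u).
  by apply: (@can_inj _ _ _ (op2 u)) => v; rewrite /op2 /= !addKb; case: v.
have o2 v : injective (op2^~ v).
  by apply: (@can_inj _ _ _ (op2^~ v)) => u; rewrite /op2 /= !addbK; case: u.
have E := @count_gen (bool * bool)%type op2 2 (fun t => (xb x b0 t, xb y b0 t))
  (fun t => (xb x b1 t, xb y b1 t)) (fun t => (xb x b2 t, xb y b2 t))
  o1 o2 (F b0) (F b1) (F b2) H8.
rewrite LS2_eq E nlat2 card_prod card_bool.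
by rewrite (_ : 16 = 2 ^ 4)%N // -expnM.
Qed.

Lemma LSc x y z : (forall k, [/\ wt (block x k) = 4%N, wt (block y k) = 4%N
                      & wt (block z k) = 4%N]) ->
  (forall k, indep_mod1 (block x k) (block y k) (block z k)) ->
  (forall k, [/\ wt (block x k + block y k) = 4%N,
                 wt (block x k + block z k) = 4%N
               & wt (block y k + block z k) = 4%N]) -> #|LS3 x y z| = 1%N.
Proof.
move=> Hw Hind Hw2.
have F k : forall g, #|[set t | (xb x k t, xb y k t, xb z k t) == g]| = 1%N.
  case: (Hw k) => H1 H2 H3; case: (Hw2 k) => H4 H5 H6.
  move: (Hind k) => /forallP/(_ 1)/forallP/(_ 1)/forallP/(_ 1).
  rewrite oner_eq0 /= !scale1r => /andP [Hs0 Hs1].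
  apply: fib3 => //.
  - exact: (etrans (esym (wt_add2 _ _)) H4).
  - exact: (etrans (esym (wt_add2 _ _)) H5).
  - exact: (etrans (esym (wt_add2 _ _)) H6).
  - by rewrite -wt_add3 wt_pos // wt_lt8.
have H8 : (#|{: bool * bool * bool}| * 1 = 8)%N by rewrite !card_prod card_bool.
have o1 u : injective (op3 u).
  by apply: (@can_inj _ _ _ (op3 u)) => v; rewrite /op3 /= !addKb; case: v => [[]].
have o2 v : injective (op3^~ v).
  by apply: (@can_inj _ _ _ (op3^~ v)) => u; rewrite /op3 /= !addbK; case: u => [[]].
have E := @count_gen (bool * bool * bool)%type op3 1
  (fun t => (xb x b0 t, xb y b0 t, xb z b0 t))
  (fun t => (xb x b1 t, xb y b1 t, xb z b1 t))
  (fun t => (xb x b2 t, xb y b2 t, xb z b2 t))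
  o1 o2 (F b0) (F b1) (F b2) H8.
by rewrite LS3_eq E nlat1 exp1n.
Qed.

Unset Implicit Arguments.
Theorem lemma2 (x y z : 'rV['F_2]_24) :
  orth x y -> orth x z -> orth y z ->
  (forall i : 'I_3, [/\ wt (block x i) = 4%N, wt (block y i) = 4%N
                      & wt (block z i) = 4%N]) ->
  (forall i : 'I_3, indep_mod1 (block x i) (block y i) (block z i)) ->
  (forall i : 'I_3, [/\ wt (block x i + block y i) = 4%N,
                        wt (block x i + block z i) = 4%N
                      & wt (block y i + block z i) = 4%N]) ->
  [/\ #|LS x| = (576 ^ 4)%N, #|LS y| = (576 ^ 4)%N & #|LS z| = (576 ^ 4)%N] /\
  (#|LS2 x y| = (16 ^ 4)%N /\ LS2 x y = LS2 x (x + y) /\ LS2 x y = LS2 (x + y) y) /\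
  #|LS3 x y z| = 1%N.
Proof.
move=> _ _ _ Hw Hind Hw2.
have Hx k : wt (block x k) = 4%N by case: (Hw k).
have Hy k : wt (block y k) = 4%N by case: (Hw k).
have Hz k : wt (block z k) = 4%N by case: (Hw k).
have Hxy k : wt (block x k + block y k) = 4%N by case: (Hw2 k).
split; first by split; [exact: LSa Hx | exact: LSa Hy | exact: LSa Hz].
split; last exact: LSc Hw Hind Hw2.
split; first exact: LSb Hx Hy Hxy.
split; [exact: LS2_sum1 | exact: LS2_sum2].
Qed.
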